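(* In the setting of the context, let $\underline b^{j}$ denote the lowest bid in the $n_j$-bidder auction and, for $\gamma\in[0,1]$, let $b^j_\gamma$ be the $\gamma$-quantile of $G(\cdot\mid n_j)$, $j=1,2$. Then $$\theta=\frac{n_2(n_1-1)g(\underline b^{2}\mid n_2)-n_1(n_2-1)g(\underline b^{1}\mid n_1)}{(n_1-1)g(\underline b^{2}\mid n_2)-(n_2-1)g(\underline b^{1}\mid n_1)},$$ the function $H(\gamma):=D(\gamma)/D'(\gamma)$ satisfies $$H(\gamma)=\frac{b^2_\gamma-b^1_\gamma}{1-\theta}\left[\frac{1}{(n_1-1)g(b^1_\gamma\mid n_1)}-\frac{1}{(n_2-1)g(b^2_\gamma\mid n_2)}\right]^{-1},$$ $D(\gamma)=\exp\!\left[-\int_\gamma^1 \frac{dt}{H(t)}\right]$, and the $\gamma$-quantile $v_\gamma$ of $F_0$ satisfies, for $j=1,2$, $$v_\gamma=b^j_\gamma+\frac{(1-\theta)H(\gamma)}{(n_j-1)g(b^j_\gamma\mid n_j)}.$$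
   Context: First-price auctions (no reserve price) with $n\in\{n_1,n_2\}$ bidders, $2\le n_1<n_2$. Bidders' values are i.i.d. from $F_0$ on $[\underline v,\overline v]$ with continuous density $f_0>0$. Utility is CRRA, $u(w)=w^{1-\theta}/(1-\theta)$, $\theta\in[0,1)$. Bidders have maxmin expected utility over a weakly compact convex set $\Gamma$ of strictly increasing $C^1$ distributions on $[\underline v,\overline v]$ containing $F_0$ with least element $F^*\in\Gamma$ ($F^*\le F$ pointwise for all $F\in\Gamma$) having density $f^*>0$; $D(\gamma):=F^*(F_0^{-1}(\gamma))$, which is strictly increasing, $C^1$, with $D(0)=0$, $D(1)=1$, $D'(0)>0$. $F_0$ and $\Gamma$ do not depend on $n$ (exogenous participation). For $n$ bidders the symmetric equilibrium is a strictly increasing differentiable $\beta_n$ such that for every value $v$, $x=v$ maximizes $u[v-\beta_n(x)]D[F_0(x)]^{n-1}$; $G(\cdot\mid n)$ is the distribution of $\beta_n(v)$, $v\sim F_0$, with density $g(\cdot\mid n)$, assumed positive and continuous on its support, and $\underline b^j=\beta_{n_j}(\underline v)$. *)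

(* Defs.v *)
From Stdlib Require Import Reals.
Open Scope R_scope.

Definition cont_on (f : R -> R) (a b : R) : Prop :=
  forall x, a <= x <= b -> limit1_in f (fun y => a <= y <= b) (f x) x.

Definition strict_incr_on (f : R -> R) (a b : R) : Prop :=
  forall x y, a <= x -> x < y -> y <= b -> f x < f y.

(* F is the c.d.f. of a distribution supported on [a,b], with density f
   continuous on [a,b] (F' = f on (a,b); at the endpoints f is the
   continuous extension, i.e. the one-sided derivative). *)
Definition cdf_with_density (a b : R) (F f : R -> R) : Prop :=
  a < b /\ F a = 0 /\ F b = 1 /\
  (forall x, x < a -> F x = 0) /\ (forall x, b < x -> F x = 1) /\
  cont_on F a b /\
  (forall x, a < x < b -> derivable_pt_lim F x (f x)) /\
  cont_on f a b.

Definition C1_on (g g' : R -> R) (a b : R) : Prop :=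
  cont_on g a b /\ (forall x, a < x < b -> derivable_pt_lim g x (g' x)) /\
  cont_on g' a b.

(* CRRA utility u(w) = w^(1-θ)/(1-θ) for w >= 0; for w < 0 (overbidding,
   never optimal) we use the odd extension, which is strictly negative. *)
Definition crra (theta w : R) : R :=
  if Rlt_dec 0 w then Rpower w (1 - theta) / (1 - theta)
  else if Rlt_dec w 0 then - (Rpower (- w) (1 - theta) / (1 - theta))
  else 0.

(* Γ: set of strictly increasing C^1 distributions on [vl,vh], convex.
   (Weak compactness is not modelled.) *)
Definition ambiguity_set (vl vh : R) (Gam : (R -> R) -> Prop) : Prop :=
  (forall F, Gam F -> exists f, cdf_with_density vl vh F f /\ strict_incr_on F vl vh) /\
  (forall F1 F2 l, Gam F1 -> Gam F2 -> 0 <= l <= 1 ->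
     Gam (fun x => l * F1 x + (1 - l) * F2 x)).

Definition equilibrium (vl vh theta : R) (F0 D : R -> R) (n : nat) (beta : R -> R) : Prop :=
  strict_incr_on beta vl vh /\ cont_on beta vl vh /\
  (forall v, vl < v < vh -> exists l, derivable_pt_lim beta v l) /\
  (forall v x, vl <= v <= vh -> vl <= x <= vh ->
     crra theta (v - beta x) * D (F0 x) ^ (n - 1)
       <= crra theta (v - beta v) * D (F0 v) ^ (n - 1)).

Definition bid_distribution (vl vh : R) (F0 beta G g : R -> R) : Prop :=
  cdf_with_density (beta vl) (beta vh) G g /\
  (forall b, beta vl <= b <= beta vh -> 0 < g b) /\
  (forall v, vl <= v <= vh -> G (beta v) = F0 v).

Definition is_quantile (a b : R) (F : R -> R) (gamma q : R) : Prop :=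
  a <= q <= b /\ F q = gamma.

Definition Hfun (D Dp : R -> R) (gamma : R) : R := D gamma / Dp gamma.

(* Main.v *)
Require Import Defs.
From Stdlib Require Import Reals Ranalysis5 Lra Lia Psatz Classical ClassicalEpsilon.
Open Scope R_scope.

Definition clamp (a b x : R) := Rmax a (Rmin b x).

Lemma clamp_in a b x : a <= b -> a <= clamp a b x <= b.
Proof. intros; unfold clamp, Rmax, Rmin; repeat destruct (Rle_dec _ _); lra. Qed.

Lemma clamp_id a b x : a <= x <= b -> clamp a b x = x.
Proof. intros; unfold clamp, Rmax, Rmin; repeat destruct (Rle_dec _ _); lra. Qed.

Lemma clamp_lip a b x y : a <= b -> Rabs (clamp a b x - clamp a b y) <= Rabs (x - y).
Proof. intros; unfold clamp, Rmax, Rmin; repeat destruct (Rle_dec _ _); split_Rabs; lra. Qed.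

Lemma cont_on_eps f a b : cont_on f a b -> forall x, a <= x <= b ->
  forall eps, eps > 0 -> exists d, d > 0 /\ forall y, a <= y <= b -> Rabs (y - x) < d -> Rabs (f y - f x) < eps.
Proof.
  intros H x Hx eps He. destruct (H x Hx eps He) as [d [Hd H']].
  exists d; split; auto. intros y Hy Hyx. apply (H' y). split; auto.
Qed.

Lemma clamp_cont f a b : a <= b -> cont_on f a b -> forall x, continuity_pt (fun t => f (clamp a b t)) x.
Proof.
  intros Hab H x eps He.
  destruct (cont_on_eps f a b H (clamp a b x) (clamp_in a b x Hab) eps He) as [d [Hd H']].
  exists d; split; auto. intros y [_ Hy]. simpl in *. unfold Rdist in *.
  apply H'. apply clamp_in; auto. eapply Rle_lt_trans. apply clamp_lip; auto. auto.
Qed.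

Lemma loc_deriv f g x l d : derivable_pt_lim f x l -> 0 < d ->
  (forall y, Rabs (y - x) < d -> f y = g y) -> derivable_pt_lim g x l.
Proof.
  intros H Hd Heq eps He. destruct (H eps He) as [del Hdel].
  assert (Hm : 0 < Rmin del d) by (apply Rmin_pos; [apply cond_pos|auto]).
  exists (mkposreal _ Hm). intros h Hh Hhd. simpl in Hhd.
  rewrite <- (Heq (x + h)), <- (Heq x).
  - apply Hdel; auto. eapply Rlt_le_trans; [apply Hhd|apply Rmin_l].
  - replace (x - x) with 0 by ring. rewrite Rabs_R0; auto.
  - replace (x + h - x) with h by ring. eapply Rlt_le_trans; [apply Hhd|apply Rmin_r].
Qed.

Lemma cont_restr f a b a' b' : cont_on f a b -> a <= a' -> b' <= b -> cont_on f a' b'.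
Proof.
  intros H Ha Hb x Hx eps He. destruct (H x ltac:(lra) eps He) as [d [Hd H']].
  exists d; split; auto. intros y [Hy Hyx]. apply H'. split; auto. lra.
Qed.

Lemma MVT_rel f f' a b : a < b -> cont_on f a b ->
  (forall x, a < x < b -> derivable_pt_lim f x (f' x)) ->
  exists c, a < c < b /\ f b - f a = f' c * (b - a).
Proof.
  intros Hab Hc Hd.
  set (h := fun t => f (clamp a b t)).
  assert (Hh : forall c, a < c < b -> derivable_pt_lim h c (f' c)).
  { intros c Hcc. apply (loc_deriv f h c (f' c) (Rmin (c - a) (b - c))); auto.
    - apply Rmin_pos; lra.
    - intros y Hy. unfold h. rewrite clamp_id; auto.
      assert (Rmin (c - a) (b - c) <= c - a) by apply Rmin_l.
      assert (Rmin (c - a) (b - c) <= b - c) by apply Rmin_r.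
      split_Rabs; lra. }
  assert (pr1 : forall c, a < c < b -> derivable_pt h c).
  { intros c Hcc. exists (f' c). exact (Hh c Hcc). }
  assert (pr2 : forall c, a < c < b -> derivable_pt id c).
  { intros c _. apply derivable_pt_id. }
  assert (C1 : forall c, a <= c <= b -> continuity_pt h c).
  { intros c _. apply clamp_cont; auto; lra. }
  assert (C2 : forall c, a <= c <= b -> continuity_pt id c).
  { intros c _. apply derivable_continuous_pt. apply derivable_pt_id. }
  destruct (MVT h id a b pr1 pr2 Hab C1 C2) as [c [P Hc']].
  - exists c; split; auto.
    rewrite (derive_pt_eq_0 h c (f' c) (pr1 c P) (Hh c P)) in Hc'.
    rewrite (derive_pt_eq_0 id c 1 (pr2 c P) (derivable_pt_lim_id c)) in Hc'.
    unfold h, id in Hc'. rewrite !clamp_id in Hc'; lra.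
Qed.

Lemma IVT_rel f a b y : a < b -> cont_on f a b -> f a <= y <= f b ->
  exists x, a <= x <= b /\ f x = y.
Proof.
  intros Hab Hc Hy.
  destruct (Req_dec y (f a)) as [E|E]. { exists a; split; [lra|auto]. }
  destruct (Req_dec y (f b)) as [E'|E']. { exists b; split; [lra|auto]. }
  set (h := fun t => f (clamp a b t) - y).
  destruct (IVT_interv h a b) as [z [Hz Hz']]; auto.
  - intros z _. unfold h. apply (continuity_pt_minus (fun t => f (clamp a b t)) (fun _ => y)).
    apply clamp_cont; auto; lra. apply continuity_pt_const. intros u v; auto.
  - unfold h. rewrite clamp_id; lra.
  - unfold h. rewrite clamp_id; lra.
  - exists z; split; auto. unfold h in Hz'. rewrite clamp_id in Hz'; auto; lra.
Qed.

Lemma lim_le h Dm L x0 C : limit1_in h Dm L x0 ->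
  (forall d, d > 0 -> exists y, Dm y /\ Rabs (y - x0) < d /\ h y <= C) -> L <= C.
Proof.
  intros Hl Ha. destruct (Rle_dec L C) as [|n]; auto. exfalso.
  destruct (Hl (L - C) ltac:(lra)) as [d [Hd H]].
  destruct (Ha d Hd) as [y [Hy [Hyd Hyc]]].
  assert (K := H y (conj Hy Hyd)). simpl in K. unfold Rdist in K. split_Rabs; lra.
Qed.

Lemma lim_ge h Dm L x0 C : limit1_in h Dm L x0 ->
  (forall d, d > 0 -> exists y, Dm y /\ Rabs (y - x0) < d /\ C <= h y) -> C <= L.
Proof.
  intros Hl Ha. destruct (Rle_dec C L) as [|n]; auto. exfalso.
  destruct (Hl (C - L) ltac:(lra)) as [d [Hd H]].
  destruct (Ha d Hd) as [y [Hy [Hyd Hyc]]].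
  assert (K := H y (conj Hy Hyd)). simpl in K. unfold Rdist in K. split_Rabs; lra.
Qed.

Lemma lim_sub f D D' l x : limit1_in f D l x -> (forall y, D' y -> D y) -> limit1_in f D' l x.
Proof.
  intros H HD eps He. destruct (H eps He) as [d [Hd H']]. exists d; split; auto.
  intros y [Hy Hyx]. apply H'. split; auto.
Qed.

Lemma lim_comp_on u h D l x0 c d : limit1_in u D l x0 -> (forall y, D y -> c <= u y <= d) ->
  cont_on h c d -> c <= l <= d -> limit1_in (fun y => h (u y)) D (h l) x0.
Proof.
  intros Hu Hr Hh Hl. apply lim_sub with (Dgf D (fun z => c <= z <= d) u).
  - apply limit_comp with l; auto.
  - intros y Hy; split; auto.
Qed.

Lemma lim_comp_pt u h D l x0 : limit1_in u D l x0 -> continuity_pt h l ->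
  limit1_in (fun y => h (u y)) D (h l) x0.
Proof.
  intros Hu Hh eps He. destruct (Hh eps He) as [a [Ha Ha']].
  destruct (Hu a Ha) as [d [Hd Hd']]. exists d; split; auto.
  intros y Hy. destruct (Req_dec (u y) l) as [E|E].
  - rewrite E. simpl. unfold Rdist. rewrite Rminus_diag, Rabs_R0; auto.
  - apply (Ha' (u y)). split. { split. exact I. auto. } apply Hd'. auto.
Qed.

Lemma lim_squeeze u w D l x0 : limit1_in u D l x0 ->
  (forall y, D y -> Rabs (w y - l) <= Rabs (u y - l)) -> limit1_in w D l x0.
Proof.
  intros Hu Hb eps He. destruct (Hu eps He) as [d [Hd H]]. exists d; split; auto.
  intros y Hy. simpl. unfold Rdist. eapply Rle_lt_trans. apply Hb, Hy. apply (H y Hy).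
Qed.

Lemma cont_at f a b x : cont_on f a b -> a <= x <= b -> limit1_in f (fun y => a <= y <= b) (f x) x.
Proof. intros H Hx. apply H; auto. Qed.

Lemma adh_open a b x0 : a < b -> a <= x0 <= b -> forall d, d > 0 ->
  exists y, a < y < b /\ Rabs (y - x0) < d.
Proof.
  intros Hab Hx d Hd.
  assert (H1 := Rmin_l d ((b - a)/2)). assert (H2 := Rmin_r d ((b - a)/2)).
  assert (H3 : 0 < Rmin d ((b-a)/2)) by (apply Rmin_pos; lra).
  destruct (Rle_dec x0 ((a+b)/2)).
  - exists (x0 + Rmin d ((b-a)/2) / 2). split. lra. split_Rabs; lra.
  - exists (x0 - Rmin d ((b-a)/2) / 2). split. lra. split_Rabs; lra.
Qed.

Lemma ext_zero P a b x0 : a < b -> a <= x0 <= b ->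
  limit1_in P (fun y => a <= y <= b) (P x0) x0 -> (forall y, a < y < b -> P y = 0) -> P x0 = 0.
Proof.
  intros Hab Hx Hl Hz. apply Rle_antisym.
  - apply lim_le with (1 := Hl). intros d Hd. destruct (adh_open a b x0 Hab Hx d Hd) as [y [Hy Hy']].
    exists y. repeat split; try lra; auto. rewrite Hz; auto; lra.
  - apply lim_ge with (1 := Hl). intros d Hd. destruct (adh_open a b x0 Hab Hx d Hd) as [y [Hy Hy']].
    exists y. repeat split; try lra; auto. rewrite Hz; auto; lra.
Qed.

Lemma Rpower_pos x y : 0 < Rpower x y.
Proof. unfold Rpower; apply exp_pos. Qed.

Lemma crra_pos th w : 0 <= th < 1 -> 0 < w -> 0 < crra th w.
Proof.
  intros Ht Hw. unfold crra. destruct (Rlt_dec 0 w); [|lra].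
  apply Rdiv_lt_0_compat; [apply Rpower_pos|lra].
Qed.

Lemma crra_neg th w : 0 <= th < 1 -> w < 0 -> crra th w < 0.
Proof.
  intros Ht Hw. unfold crra. destruct (Rlt_dec 0 w); [lra|]. destruct (Rlt_dec w 0); [|lra].
  assert (0 < Rpower (- w) (1 - th) / (1 - th)) by (apply Rdiv_lt_0_compat; [apply Rpower_pos|lra]). lra.
Qed.

Lemma crra_0 th : crra th 0 = 0.
Proof. unfold crra. destruct (Rlt_dec 0 0); [lra|]. destruct (Rlt_dec 0 0); [lra|]. auto. Qed.

Lemma crra_eq th w : 0 < w -> crra th w = Rpower w (1-th) * / (1-th).
Proof. intros. unfold crra. destruct (Rlt_dec 0 w); [|lra]. auto. Qed.

Lemma dmul f g x a b : derivable_pt_lim f x a -> derivable_pt_lim g x b ->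
  derivable_pt_lim (fun y => f y * g y) x (a * g x + f x * b).
Proof. intros; apply (derivable_pt_lim_mult f g x a b); auto. Qed.

Lemma dcomp f g x a b : derivable_pt_lim f x a -> derivable_pt_lim g (f x) b ->
  derivable_pt_lim (fun y => g (f y)) x (b * a).
Proof. intros; apply (derivable_pt_lim_comp f g x a b); auto. Qed.

Lemma dconst c x : derivable_pt_lim (fun _ => c) x 0.
Proof. apply (derivable_pt_lim_const c x). Qed.

Lemma did x : derivable_pt_lim (fun y => y) x 1.
Proof. apply (derivable_pt_lim_id x). Qed.

Lemma dsub f g x a b : derivable_pt_lim f x a -> derivable_pt_lim g x b ->
  derivable_pt_lim (fun y => f y - g y) x (a - b).
Proof. intros; apply (derivable_pt_lim_minus f g x a b); auto. Qed.

Lemma locmax f c l d : derivable_pt_lim f c l -> 0 < d ->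
  (forall y, Rabs (y - c) < d -> f y <= f c) -> l = 0.
Proof.
  intros H Hd Hm. assert (pr : derivable_pt f c) by (exists l; auto).
  rewrite <- (derive_pt_eq_0 f c l pr H).
  apply (deriv_maximum f (c - d) (c + d) c pr); try lra.
  intros x H1 H2. apply Hm. split_Rabs; lra.
Qed.

Definition BaseCtx vl vh th F0 f0 Fs fs :=
  vl < vh /\ 0 <= th < 1 /\ cdf_with_density vl vh F0 f0 /\ (forall v, vl <= v <= vh -> 0 < f0 v) /\
  strict_incr_on F0 vl vh /\ cdf_with_density vl vh Fs fs /\ (forall v, vl <= v <= vh -> 0 < fs v) /\
  strict_incr_on Fs vl vh.

Definition EqCtx vl vh th F0 f0 Fs fs (D : R -> R) k beta G g :=
  BaseCtx vl vh th F0 f0 Fs fs /\ (forall v, vl <= v <= vh -> D (F0 v) = Fs v) /\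
  equilibrium vl vh th F0 D (S (S k)) beta /\ bid_distribution vl vh F0 beta G g.

Ltac unpack H :=
  unfold EqCtx, BaseCtx, equilibrium, bid_distribution, cdf_with_density in H;
  destruct H as [[Hvv [Hth [[_ [HF0a [HF0b [_ [_ [HF0c [HF0d HF0e]]]]]]] [Hf0p [HF0i
     [[_ [HFsa [HFsb [_ [_ [HFsc [HFsd HFse]]]]]]] [Hfsp HFsi]]]]]]]
     [HDF [[Hbi [Hbc [Hbd Hopt]]] [[Hbvv [HGa [HGb [_ [_ [HGc [HGd HGe]]]]]]] [Hgp HGF]]]]].

Lemma sincr_le f a b x y : strict_incr_on f a b -> a <= x -> x <= y -> y <= b -> f x <= f y.
Proof. intros H H1 H2 H3. destruct (Req_dec x y). subst; lra. left; apply H; lra. Qed.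

Lemma E_lt vl vh th F0 f0 Fs fs D k beta G g :
  EqCtx vl vh th F0 f0 Fs fs D k beta G g ->
  forall v, vl < v <= vh -> beta v < v.
Proof.
  intros H. unpack H. intros v Hv.
  assert (HFsv : forall x, vl < x <= vh -> 0 < Fs x).
  { intros x Hx. rewrite <- HFsa. apply HFsi; lra. }
  assert (K := Hopt v vl ltac:(lra) ltac:(lra)).
  rewrite !HDF in K by lra. rewrite HFsa in K. simpl in K.
  rewrite Rmult_0_l, Rmult_0_r in K.
  assert (P1 : 0 < Fs v * Fs v ^ k) by (apply Rmult_lt_0_compat; [|apply pow_lt]; apply HFsv; lra).
  destruct (Rtotal_order (beta v) v) as [L|[E|L]]; auto; exfalso.
  - set (x := (vl + v) / 2).
    assert (Bx : beta x < beta v) by (apply Hbi; unfold x; lra).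
    assert (K2 := Hopt v x ltac:(lra) ltac:(unfold x; lra)).
    rewrite !HDF in K2 by (unfold x; lra).
    rewrite E, Rminus_diag, crra_0 in K2. simpl in K2.
    assert (0 < crra th (v - beta x)) by (apply crra_pos; lra).
    assert (0 < Fs x * Fs x ^ k) by (apply Rmult_lt_0_compat; [|apply pow_lt]; apply HFsv; unfold x; lra).
    assert (0 < crra th (v - beta x) * (Fs x * Fs x ^ k)) by (apply Rmult_lt_0_compat; auto).
    lra.
  - assert (crra th (v - beta v) < 0) by (apply crra_neg; lra).
    assert (crra th (v - beta v) * (Fs v * Fs v ^ k) < 0).
    { nra. }
    lra.
Qed.

Lemma E_foc vl vh th F0 f0 Fs fs D k beta G g :
  EqCtx vl vh th F0 f0 Fs fs D k beta G g ->
  forall v l, vl < v < vh -> derivable_pt_lim beta v l ->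
  (1 - th) * l * Fs v = (INR k + 1) * (v - beta v) * fs v /\ f0 v = g (beta v) * l.
Proof.
  intros H v l Hv Hl. assert (Hlt := E_lt _ _ _ _ _ _ _ _ _ _ _ _ H v ltac:(lra)).
  unpack H. split.
  - assert (He : 0 < v - beta v) by lra.
    pose (psi := fun y => (Rpower (v - beta y) (1 - th) * / (1 - th)) * Fs y ^ (S k)).
    assert (Dpsi : derivable_pt_lim psi v
       (((1 - th) * Rpower (v - beta v) (1 - th - 1) * (0 - l) * / (1 - th) + Rpower (v - beta v) (1 - th) * 0) * Fs v ^ (S k)
        + Rpower (v - beta v) (1 - th) * / (1 - th) * ((INR (S k) * Fs v ^ k) * fs v))).
    { unfold psi.
      apply (dmul (fun y => Rpower (v - beta y) (1 - th) * / (1 - th)) (fun y => Fs y ^ (S k))).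
      - apply (dmul (fun y => Rpower (v - beta y) (1 - th)) (fun _ => / (1 - th))).
        + apply (dcomp (fun y => v - beta y) (fun z => Rpower z (1 - th))).
          * apply (dsub (fun _ => v) beta); [apply dconst|auto].
          * apply derivable_pt_lim_power. auto.
        + apply dconst.
      - apply (dcomp Fs (fun z => z ^ (S k))).
        + apply HFsd; auto.
        + apply derivable_pt_lim_pow. }
    destruct (cont_on_eps beta vl vh Hbc v ltac:(lra) (v - beta v) He) as [d [Hd Hd']].
    assert (Hm : 0 < Rmin d (Rmin (v - vl) (vh - v))) by (repeat apply Rmin_pos; lra).
    assert (Z := locmax psi v _ _ Dpsi Hm).
    assert (H1 := Rmin_l d (Rmin (v - vl) (vh - v))). assert (H2 := Rmin_r d (Rmin (v - vl) (vh - v))).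
    assert (H3 := Rmin_l (v - vl) (vh - v)). assert (H4 := Rmin_r (v - vl) (vh - v)).
    assert (Z' : forall y, Rabs (y - v) < Rmin d (Rmin (v - vl) (vh - v)) -> psi y <= psi v).
    { intros y Hy. assert (Hy' : vl <= y <= vh) by (split_Rabs; lra).
      assert (Hb := Hd' y Hy' ltac:(lra)).
      assert (Hpos : 0 < v - beta y) by (split_Rabs; lra).
      assert (K := Hopt v y ltac:(lra) Hy').
      replace (S (S k) - 1)%nat with (S k) in K by lia.
      rewrite !HDF in K by lra. rewrite !crra_eq in K by lra. exact K. }
    specialize (Z Z').
    assert (Rpower (v - beta v) (1 - th) = Rpower (v - beta v) (1 - th - 1) * (v - beta v)).
    { replace (1 - th) with ((1 - th - 1) + 1) at 1 by ring. rewrite Rpower_plus, Rpower_1; auto. }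
    rewrite H in Z. rewrite S_INR in Z. simpl in Z.
    assert (PA := Rpower_pos (v - beta v) (1 - th - 1)).
    assert (PB : 0 < Fs v ^ k). { apply pow_lt. rewrite <- HFsa. apply HFsi; lra. }
    assert (Z2 : Rpower (v - beta v) (1 - th - 1) * Fs v ^ k * / (1 - th) *
                 ((1 - th) * l * Fs v - (INR k + 1) * (v - beta v) * fs v) = 0).
    { match type of Z with ?L = 0 => transitivity (- L) end.
      - field. lra.
      - rewrite Z. ring. }
    apply Rmult_integral in Z2. destruct Z2 as [Z2|Z2]; [|lra].
    exfalso. assert (0 < / (1 - th)) by (apply Rinv_0_lt_compat; lra).
    assert (0 < Rpower (v - beta v) (1 - th - 1) * Fs v ^ k * / (1 - th)).
    { repeat apply Rmult_lt_0_compat; auto. }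
    lra.
  - assert (Hbv : beta vl < beta v < beta vh) by (split; apply Hbi; lra).
    assert (K := dcomp beta G v l (g (beta v)) Hl (HGd _ Hbv)).
    assert (Hm : 0 < Rmin (v - vl) (vh - v)) by (apply Rmin_pos; lra).
    assert (H3 := Rmin_l (v - vl) (vh - v)). assert (H4 := Rmin_r (v - vl) (vh - v)).
    assert (K2 := loc_deriv _ F0 v _ _ K Hm).
    assert (K3 : derivable_pt_lim F0 v (g (beta v) * l)).
    { apply K2. intros y Hy. apply HGF. split_Rabs; lra. }
    apply (uniqueness_limite F0 v); auto.
Qed.

Lemma sincr_inj f a b x y : strict_incr_on f a b -> a <= x <= b -> a <= y <= b -> f x = f y -> x = y.
Proof.
  intros H Hx Hy E. destruct (Rtotal_order x y) as [L|[L|L]]; auto.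
  - assert (f x < f y) by (apply H; lra). lra.
  - assert (f y < f x) by (apply H; lra). lra.
Qed.

Lemma E_P vl vh th F0 f0 Fs fs D k beta G g :
  EqCtx vl vh th F0 f0 Fs fs D k beta G g ->
  forall v, vl <= v <= vh ->
  (1 - th) * f0 v * Fs v - (INR k + 1) * (v - beta v) * fs v * g (beta v) = 0.
Proof.
  intros H. assert (Hfoc := E_foc _ _ _ _ _ _ _ _ _ _ _ _ H).
  unpack H. intros v Hv.
  apply (ext_zero (fun v => (1 - th) * f0 v * Fs v - (INR k + 1) * (v - beta v) * fs v * g (beta v)) vl vh v Hvv Hv).
  - apply limit_minus.
    + apply limit_mul. apply limit_mul. apply limit_free. apply cont_at; auto. apply cont_at; auto.
    + apply limit_mul. apply limit_mul. apply limit_mul. apply limit_free.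
      apply limit_minus. apply lim_x. apply cont_at; auto. apply cont_at; auto.
      apply (lim_comp_on beta g _ (beta v) v (beta vl) (beta vh)).
      * apply cont_at; auto.
      * intros y Hy. split; apply (sincr_le beta vl vh); auto; lra.
      * auto.
      * split; apply (sincr_le beta vl vh); auto; lra.
  - intros y Hy. destruct (Hbd y Hy) as [l Hl]. destruct (Hfoc y l Hy Hl) as [E1 E2].
    rewrite E2. replace ((1 - th) * (g (beta y) * l) * Fs y) with (g (beta y) * ((1 - th) * l * Fs y)) by ring.
    rewrite E1. ring.
Qed.

Lemma E_low vl vh th F0 f0 Fs fs D k beta G g :
  EqCtx vl vh th F0 f0 Fs fs D k beta G g -> beta vl = vl.
Proof.
  intros H. assert (K := E_P _ _ _ _ _ _ _ _ _ _ _ _ H vl).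
  unpack H. specialize (K ltac:(lra)). rewrite HFsa in K.
  assert (0 < fs vl) by (apply Hfsp; lra).
  assert (0 < g (beta vl)) by (apply Hgp; lra).
  assert (0 < INR k + 1) by (assert (0 <= INR k) by apply pos_INR; lra).
  assert (Z : (vl - beta vl) * ((INR k + 1) * fs vl * g (beta vl)) = 0) by (match type of K with ?L = 0 => transitivity (-L); [ring|rewrite K; ring] end).
  apply Rmult_integral in Z. destruct Z as [Z|Z]. lra.
  assert (0 < (INR k + 1) * fs vl * g (beta vl)) by (repeat apply Rmult_lt_0_compat; auto). lra.
Qed.

Lemma E_quant vl vh th F0 f0 Fs fs D k beta G g :
  EqCtx vl vh th F0 f0 Fs fs D k beta G g ->
  forall v b, vl <= v <= vh -> beta vl <= b <= beta vh -> G b = F0 v -> b = beta v.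
Proof.
  intros H. unpack H. intros v b Hv Hb E.
  destruct (IVT_rel beta vl vh b Hvv Hbc Hb) as [w [Hw Hw']].
  subst b. rewrite HGF in E by auto. apply (sincr_inj F0 vl vh) in E; auto. subst; auto.
Qed.

Lemma choice_fun (P : R -> R -> Prop) (Dm : R -> Prop) :
  (forall v, Dm v -> exists t, P v t) -> exists h : R -> R, forall v, Dm v -> P v (h v).
Proof.
  intros H. assert (H' : forall v, exists t, Dm v -> P v t).
  { intros v. destruct (classic (Dm v)) as [Hv|Hv].
    - destruct (H v Hv) as [t Ht]. exists t; auto.
    - exists 0. intros; contradiction. }
  exists (fun v => proj1_sig (constructive_indefinite_description _ (H' v))).
  intros v Hv. apply (proj2_sig (constructive_indefinite_description _ (H' v))). auto.
Qed.

Lemma lim_zero P a b x0 L : a < b -> a <= x0 <= b -> limit1_in P (fun y => a < y < b) L x0 ->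
  (forall y, a < y < b -> P y = 0) -> L = 0.
Proof.
  intros Hab Hx Hl Hz. apply Rle_antisym.
  - apply lim_le with (1 := Hl). intros d Hd. destruct (adh_open a b x0 Hab Hx d Hd) as [y [Hy Hy']].
    exists y. repeat split; try lra; auto. rewrite Hz; auto; lra.
  - apply lim_ge with (1 := Hl). intros d Hd. destruct (adh_open a b x0 Hab Hx d Hd) as [y [Hy Hy']].
    exists y. repeat split; try lra; auto. rewrite Hz; auto; lra.
Qed.

Lemma E_theta vl vh th F0 f0 Fs fs D k beta G g :
  EqCtx vl vh th F0 f0 Fs fs D k beta G g ->
  f0 vl * (INR k + 2 - th) = (INR k + 1) * g (beta vl).
Proof.
  intros H. assert (HP := E_P _ _ _ _ _ _ _ _ _ _ _ _ H).
  assert (Hlow := E_low _ _ _ _ _ _ _ _ _ _ _ _ H).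
  unpack H.
  set (D0 := fun v => vl < v < vh).
  assert (Hbr : forall v, vl <= v <= vh -> beta vl <= beta v <= beta vh).
  { intros v Hv. split; apply (sincr_le beta vl vh); auto; lra. }
  assert (Hbgt : forall v, D0 v -> vl < beta v).
  { intros v Hv. rewrite <- Hlow at 1. apply Hbi; unfold D0 in Hv; lra. }
  destruct (choice_fun (fun v t => vl < t < beta v /\ G (beta v) - G vl = g t * (beta v - vl)) D0) as [h1 Hh1].
  { intros v Hv. assert (Hb := Hbgt v Hv). assert (Hb2 := Hbr v ltac:(unfold D0 in Hv; lra)).
    destruct (MVT_rel G g vl (beta v)) as [c [Hc Hc']]; auto.
    - apply cont_restr with (beta vl) (beta vh); auto; lra.
    - intros x Hx. apply HGd. lra.
    - exists c; split; auto. }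
  destruct (choice_fun (fun v t => vl < t < v /\ Fs v - Fs vl = fs t * (v - vl)) D0) as [h2 Hh2].
  { intros v Hv. unfold D0 in Hv.
    destruct (MVT_rel Fs fs vl v) as [c [Hc Hc']]; try lra.
    - apply cont_restr with vl vh; auto; lra.
    - intros x Hx. apply HFsd. lra.
    - exists c; split; auto. }
  destruct (choice_fun (fun v t => vl < t < v /\ F0 v - F0 vl = f0 t * (v - vl)) D0) as [h3 Hh3].
  { intros v Hv. unfold D0 in Hv.
    destruct (MVT_rel F0 f0 vl v) as [c [Hc Hc']]; try lra.
    - apply cont_restr with vl vh; auto; lra.
    - intros x Hx. apply HF0d. lra.
    - exists c; split; auto. }
  set (Q := fun v => (1 - th) * f0 v * fs (h2 v) * g (h1 v) - (INR k + 1) * (g (h1 v) - f0 (h3 v)) * fs v * g (beta v)).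
  assert (HQ : forall v, D0 v -> Q v = 0).
  { intros v Hv. destruct (Hh1 v Hv) as [_ E1]. destruct (Hh2 v Hv) as [_ E2]. destruct (Hh3 v Hv) as [_ E3].
    unfold D0 in Hv. specialize (HP v ltac:(lra)).
    rewrite HGF in E1 by lra. replace (G vl) with (G (beta vl)) in E1 by (rewrite Hlow; auto). rewrite HGF in E1 by lra.
    rewrite HF0a in E1, E3. rewrite HFsa in E2.
    assert (Z : (v - vl) * Q v = 0).
    { transitivity (g (h1 v) * ((1 - th) * f0 v * Fs v - (INR k + 1) * (v - beta v) * fs v * g (beta v))
        + (1 - th) * f0 v * g (h1 v) * (fs (h2 v) * (v - vl) - (Fs v - 0))
        + (INR k + 1) * fs v * g (beta v) * (f0 (h3 v) * (v - vl) - g (h1 v) * (beta v - vl))).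
      - unfold Q. ring.
      - assert (E13 : f0 (h3 v) * (v - vl) = g (h1 v) * (beta v - vl)) by (rewrite <- E1, <- E3; auto).
        rewrite HP, E2, E13. ring. }
    apply Rmult_integral in Z. destruct Z; [lra|auto]. }
  assert (Lh1 : limit1_in h1 D0 vl vl).
  { apply (lim_squeeze beta h1 D0 vl vl).
    - rewrite <- Hlow at 1. apply lim_sub with (fun y => vl <= y <= vh). apply cont_at; auto; lra.
      intros y Hy; unfold D0 in Hy; lra.
    - intros y Hy. destruct (Hh1 y Hy). split_Rabs; lra. }
  assert (Lh2 : limit1_in h2 D0 vl vl).
  { apply (lim_squeeze (fun y => y) h2 D0 vl vl). apply lim_x.
    intros y Hy. destruct (Hh2 y Hy). split_Rabs; lra. }
  assert (Lh3 : limit1_in h3 D0 vl vl).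
  { apply (lim_squeeze (fun y => y) h3 D0 vl vl). apply lim_x.
    intros y Hy. destruct (Hh3 y Hy). split_Rabs; lra. }
  assert (Hsub : forall y, D0 y -> vl <= y <= vh) by (unfold D0; intros; lra).
  assert (LQ : limit1_in Q D0 ((1 - th) * f0 vl * fs vl * g vl - (INR k + 1) * (g vl - f0 vl) * fs vl * g (beta vl)) vl).
  { unfold Q. apply limit_minus.
    - apply limit_mul. apply limit_mul. apply limit_mul. apply limit_free.
      + apply lim_sub with (fun y => vl <= y <= vh); auto. apply cont_at; auto; lra.
      + apply (lim_comp_on h2 fs D0 vl vl vl vh); auto; try lra.
        intros y Hy. destruct (Hh2 y Hy). unfold D0 in Hy. lra.
      + apply (lim_comp_on h1 g D0 vl vl (beta vl) (beta vh)); auto.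
        * intros y Hy. destruct (Hh1 y Hy). assert (Hb2 := Hbr y (Hsub y Hy)). lra.
        * rewrite Hlow. split; [lra|]. assert (Hb2 := Hbr vh ltac:(lra)). rewrite Hlow in Hbvv; lra.
    - apply limit_mul. apply limit_mul. apply limit_mul. apply limit_free.
      + apply limit_minus.
        * apply (lim_comp_on h1 g D0 vl vl (beta vl) (beta vh)); auto.
          -- intros y Hy. destruct (Hh1 y Hy). assert (Hb2 := Hbr y (Hsub y Hy)). lra.
          -- rewrite Hlow. split; [lra|]. rewrite Hlow in Hbvv; lra.
        * apply (lim_comp_on h3 f0 D0 vl vl vl vh); auto; try lra.
          intros y Hy. destruct (Hh3 y Hy). unfold D0 in Hy. lra.
      + apply lim_sub with (fun y => vl <= y <= vh); auto. apply cont_at; auto; lra.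
      + apply (lim_comp_on beta g D0 (beta vl) vl (beta vl) (beta vh)).
        * apply lim_sub with (fun y => vl <= y <= vh); auto. apply cont_at; auto; lra.
        * intros y Hy. apply Hbr. auto.
        * auto.
        * split; lra. }
  assert (Z := lim_zero Q vl vh vl _ Hvv ltac:(lra) LQ HQ).
  rewrite Hlow in Z |- *.
  assert (0 < fs vl) by (apply Hfsp; lra).
  assert (0 < g vl) by (rewrite <- Hlow; apply Hgp; lra).
  assert (Z2 : fs vl * g vl * (f0 vl * (INR k + 2 - th) - (INR k + 1) * g vl) = 0).
  { match type of Z with ?L = 0 => transitivity L; [ring|exact Z] end. }
  apply Rmult_integral in Z2. destruct Z2 as [Z2|Z2]; [|lra].
  exfalso. assert (0 < fs vl * g vl) by (apply Rmult_lt_0_compat; auto). lra.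
Qed.

Ltac unpackB H :=
  unfold BaseCtx, cdf_with_density in H;
  destruct H as [Hvv [Hth [[_ [HF0a [HF0b [_ [_ [HF0c [HF0d HF0e]]]]]]] [Hf0p [HF0i
     [[_ [HFsa [HFsb [_ [_ [HFsc [HFsd HFse]]]]]]] [Hfsp HFsi]]]]]]].

Lemma B_F0range vl vh th F0 f0 Fs fs : BaseCtx vl vh th F0 f0 Fs fs ->
  forall v, vl <= v <= vh -> 0 <= F0 v <= 1.
Proof.
  intros H. unpackB H. intros v Hv. rewrite <- HF0a, <- HF0b.
  split; apply (sincr_le F0 vl vh); auto; lra.
Qed.

Lemma B_Dp vl vh th F0 f0 Fs fs D Dp : BaseCtx vl vh th F0 f0 Fs fs ->
  (forall v, vl <= v <= vh -> D (F0 v) = Fs v) -> C1_on D Dp 0 1 ->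
  forall v, vl <= v <= vh -> Dp (F0 v) * f0 v - fs v = 0.
Proof.
  intros H HDF [HDc [HDd HDpc]]. assert (Hr := B_F0range _ _ _ _ _ _ _ H).
  unpackB H. intros v Hv.
  apply (ext_zero (fun v => Dp (F0 v) * f0 v - fs v) vl vh v Hvv Hv).
  - apply limit_minus; [apply limit_mul|apply cont_at; auto].
    + apply (lim_comp_on F0 Dp _ (F0 v) v 0 1); auto.
    + apply cont_at; auto.
  - intros y Hy.
    assert (Hy0 : 0 < F0 y < 1) by (rewrite <- HF0a, <- HF0b; split; apply HF0i; lra).
    assert (K := dcomp F0 D y (f0 y) (Dp (F0 y)) (HF0d y Hy) (HDd _ Hy0)).
    assert (Hm : 0 < Rmin (y - vl) (vh - y)) by (apply Rmin_pos; lra).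
    assert (H3 := Rmin_l (y - vl) (vh - y)). assert (H4 := Rmin_r (y - vl) (vh - y)).
    assert (K2 : derivable_pt_lim Fs y (Dp (F0 y) * f0 y)).
    { apply (loc_deriv _ Fs y _ _ K Hm). intros z Hz. apply HDF. split_Rabs; lra. }
    rewrite (uniqueness_limite Fs y _ _ K2 (HFsd y Hy)). ring.
Qed.

Lemma E_vform vl vh th F0 f0 Fs fs D Dp k beta G g :
  EqCtx vl vh th F0 f0 Fs fs D k beta G g ->
  (forall v, vl <= v <= vh -> Dp (F0 v) * f0 v - fs v = 0) ->
  forall gamma v b, is_quantile vl vh F0 gamma v -> is_quantile (beta vl) (beta vh) G gamma b ->
  b = beta v /\ v = b + (1 - th) * Hfun D Dp gamma / ((INR k + 1) * g b).
Proof.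
  intros H HB gamma v b [Hv Hvg] [Hb Hbg].
  assert (Hq := E_quant _ _ _ _ _ _ _ _ _ _ _ _ H v b Hv Hb ltac:(congruence)).
  assert (HP := E_P _ _ _ _ _ _ _ _ _ _ _ _ H v Hv).
  unpack H. split; auto. subst b gamma.
  specialize (HB v Hv). rewrite <- (HDF v Hv) in HP.
  assert (0 < f0 v) by auto. assert (0 < fs v) by auto.
  assert (Hg : 0 < g (beta v)) by (apply Hgp; split; apply (sincr_le beta vl vh); auto; lra).
  assert (Hk : 0 < INR k + 1) by (assert (0 <= INR k) by apply pos_INR; lra).
  assert (HDp : 0 < Dp (F0 v)).
  { destruct (Rlt_le_dec 0 (Dp (F0 v))) as [|L]; auto. exfalso. nra. }
  unfold Hfun.
  replace (fs v) with (Dp (F0 v) * f0 v) in HP by lra.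
  assert (E : (v - beta v) * (f0 v * Dp (F0 v) * (INR k + 1) * g (beta v)) =
              (1 - th) * (D (F0 v) / Dp (F0 v)) / ((INR k + 1) * g (beta v)) * (f0 v * Dp (F0 v) * (INR k + 1) * g (beta v))).
  { field_simplify; try lra. }
  apply Rmult_eq_reg_r in E.
  - lra.
  - assert (0 < f0 v * Dp (F0 v) * (INR k + 1) * g (beta v)) by (repeat apply Rmult_lt_0_compat; auto). lra.
Qed.

Lemma Rpower_le1 x y : 0 < x <= 1 -> 0 <= y -> Rpower x y <= 1.
Proof.
  intros Hx Hy. unfold Rpower. rewrite <- exp_0.
  assert (ln x <= 0).
  { destruct (Req_dec x 1) as [E|E]. subst; rewrite ln_1; lra.
    rewrite <- ln_1. left. apply ln_increasing; lra. }
  assert (y * ln x <= 0) by nra.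
  destruct (Req_dec (y * ln x) 0) as [E|E]. rewrite E; lra. left; apply exp_increasing; lra.
Qed.

Lemma E_order vl vh th F0 f0 Fs fs D k1 beta1 G1 g1 k2 beta2 G2 g2 :
  EqCtx vl vh th F0 f0 Fs fs D k1 beta1 G1 g1 ->
  EqCtx vl vh th F0 f0 Fs fs D k2 beta2 G2 g2 -> (k1 < k2)%nat ->
  forall v, vl < v <= vh -> beta1 v < beta2 v.
Proof.
  intros HA HB Hk.
  assert (Foc1 := E_foc _ _ _ _ _ _ _ _ _ _ _ _ HA).
  assert (Foc2 := E_foc _ _ _ _ _ _ _ _ _ _ _ _ HB).
  assert (Lt1 := E_lt _ _ _ _ _ _ _ _ _ _ _ _ HA).
  assert (Low1 := E_low _ _ _ _ _ _ _ _ _ _ _ _ HA).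
  assert (Low2 := E_low _ _ _ _ _ _ _ _ _ _ _ _ HB).
  destruct HB as [_ [_ [[Hbi2 [Hbc2 [Hbd2 _]]] _]]].
  unpack HA.
  assert (Hk' : INR k1 < INR k2) by (apply lt_INR; auto).
  assert (Hk1 : 0 <= INR k1) by apply pos_INR.
  set (m2 := (INR k2 + 1) / (1 - th)).
  assert (Hm2 : 0 <= m2) by (unfold m2; apply Rle_mult_inv_pos; lra).
  set (L := fun x => Rpower (Fs x) m2 * (beta1 x - beta2 x)).
  set (D0 := fun v => vl < v < vh).
  assert (HFsv : forall x, vl < x <= vh -> 0 < Fs x).
  { intros x Hx. rewrite <- HFsa. apply HFsi; lra. }
  assert (HFs1 : forall x, vl <= x <= vh -> Fs x <= 1).
  { intros x Hx. rewrite <- HFsb. apply (sincr_le Fs vl vh); auto; lra. }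
  destruct (choice_fun (fun t l => derivable_pt_lim L t l /\ l < 0) D0) as [dl Hdl].
  { intros t Ht. unfold D0 in Ht.
    destruct (Hbd t Ht) as [l1 Hl1]. destruct (Hbd2 t Ht) as [l2 Hl2].
    destruct (Foc1 t l1 Ht Hl1) as [E1 _]. destruct (Foc2 t l2 Ht Hl2) as [E2 _].
    assert (Hpos := HFsv t ltac:(lra)).
    exists ((m2 * Rpower (Fs t) (m2 - 1) * fs t) * (beta1 t - beta2 t) + Rpower (Fs t) m2 * (l1 - l2)).
    split.
    - unfold L. apply (dmul (fun x => Rpower (Fs x) m2) (fun x => beta1 x - beta2 x)).
      + apply (dcomp Fs (fun z => Rpower z m2)). apply HFsd; auto. apply derivable_pt_lim_power; auto.
      + apply dsub; auto.
    - assert (HR : Rpower (Fs t) m2 = Rpower (Fs t) (m2 - 1) * Fs t).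
      { replace m2 with ((m2 - 1) + 1) at 1 by ring. rewrite Rpower_plus, Rpower_1; auto. }
      assert (PR := Rpower_pos (Fs t) (m2 - 1)).
      assert (X : (1 - th) * ((m2 * Rpower (Fs t) (m2 - 1) * fs t) * (beta1 t - beta2 t) + Rpower (Fs t) m2 * (l1 - l2))
               = Rpower (Fs t) (m2 - 1) * ((INR k2 + 1) * fs t * (beta1 t - beta2 t) + (1 - th) * l1 * Fs t - (1 - th) * l2 * Fs t)).
      { rewrite HR. unfold m2. field. lra. }
      rewrite E1, E2 in X.
      assert (0 < fs t) by (apply Hfsp; lra).
      assert (0 < t - beta1 t) by (assert (Lt := Lt1 t ltac:(lra)); lra).
      assert (Y : (1 - th) * ((m2 * Rpower (Fs t) (m2 - 1) * fs t) * (beta1 t - beta2 t) + Rpower (Fs t) m2 * (l1 - l2))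
               = - (Rpower (Fs t) (m2 - 1) * fs t * (t - beta1 t) * (INR k2 - INR k1))).
      { rewrite X. ring. }
      assert (0 < Rpower (Fs t) (m2 - 1) * fs t * (t - beta1 t) * (INR k2 - INR k1)).
      { repeat apply Rmult_lt_0_compat; lra. }
      nra. }
  assert (Dec : forall a c, vl < a -> a < c -> c < vh -> L c < L a).
  { intros a c Ha Hac Hc.
    destruct (MVT_cor2 L dl a c Hac) as [t [Ht Ht']].
    - intros t Ht. apply (Hdl t). unfold D0; lra.
    - destruct (Hdl t ltac:(unfold D0; lra)) as [_ Hn]. nra. }
  assert (Neg : forall v, vl < v < vh -> L v < 0).
  { intros v Hv. destruct (Rlt_le_dec (L v) 0) as [|Hge]; auto. exfalso.
    set (c := (vl + v) / 2).
    assert (Hc : L v < L c) by (apply Dec; unfold c; lra).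
    assert (Hdiff : limit1_in (fun y => beta1 y - beta2 y) (fun y => vl <= y <= vh) (beta1 vl - beta2 vl) vl).
    { apply limit_minus; apply cont_at; auto; lra. }
    rewrite Low1, Low2, Rminus_diag in Hdiff.
    destruct (Hdiff (L c) ltac:(lra)) as [d [Hd Hd']].
    assert (Hmn : 0 < Rmin d (c - vl)) by (apply Rmin_pos; unfold c; lra).
    assert (H1 := Rmin_l d (c - vl)). assert (H2 := Rmin_r d (c - vl)).
    set (a := vl + Rmin d (c - vl) / 2).
    assert (Ha : L c < L a) by (apply Dec; unfold a, c in *; lra).
    assert (K := Hd' a). simpl in K. unfold Rdist in K.
    assert (K' : Rabs (beta1 a - beta2 a - 0) < L c).
    { apply K. split. unfold a, c in *; lra. unfold a. split_Rabs; lra. }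
    rewrite Rminus_0_r in K'.
    assert (P1 := Rpower_pos (Fs a) m2).
    assert (P2 : Rpower (Fs a) m2 <= 1) by (apply Rpower_le1; auto; split; [apply HFsv|apply HFs1]; unfold a, c in *; lra).
    assert (L a <= Rabs (beta1 a - beta2 a)).
    { unfold L. split_Rabs; nra. }
    lra. }
  intros v Hv.
  assert (Lv : L v < 0).
  { destruct (Rlt_le_dec v vh) as [Hl|Hl]. apply Neg; lra.
    assert (v = vh) by lra. subst v.
    set (w := (vl + vh) / 2).
    assert (Lw : L w < 0) by (apply Neg; unfold w; lra).
    assert (LL : limit1_in L (fun y => vl <= y <= vh) (L vh) vh).
    { unfold L. apply limit_mul.
      - apply (lim_comp_pt Fs (fun z => Rpower z m2)). apply cont_at; auto; lra.
        apply derivable_continuous_pt. exists (m2 * Rpower (Fs vh) (m2 - 1)).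
        apply derivable_pt_lim_power. apply HFsv; lra.
      - apply limit_minus; apply cont_at; auto; lra. }
    assert (L vh <= L w).
    { apply (lim_le L _ _ vh (L w) LL). intros d Hd.
      assert (Hmn : 0 < Rmin d (vh - w)) by (apply Rmin_pos; unfold w; lra).
      assert (H1 := Rmin_l d (vh - w)). assert (H2 := Rmin_r d (vh - w)).
      exists (vh - Rmin d (vh - w) / 2). split. unfold w in *; lra. split. split_Rabs; lra.
      left. apply Dec; unfold w in *; lra. }
    lra. }
  unfold L in Lv. assert (P1 := Rpower_pos (Fs v) m2). nra.
Qed.

Lemma cpt_lim f x Dm : continuity_pt f x -> limit1_in f Dm (f x) x.
Proof.
  intros H eps He. destruct (H eps He) as [d [Hd H']]. exists d; split; auto.
  intros y [Hy Hyx]. destruct (Req_dec y x) as [E|E].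
  - subst. simpl. unfold Rdist. rewrite Rminus_diag, Rabs_R0; auto.
  - apply H'. split; auto. split. exact I. auto.
Qed.

Lemma B_int D Dp : C1_on D Dp 0 1 -> D 1 = 1 -> (forall t, 0 < t <= 1 -> 0 < D t) ->
  (forall t, 0 <= t <= 1 -> 0 < Dp t) ->
  forall gamma, 0 < gamma <= 1 ->
  exists pr : Riemann_integrable (fun t => / Hfun D Dp t) gamma 1, D gamma = exp (- RiemannInt pr).
Proof.
  intros [HDc [HDd HDpc]] HD1 HDp HDpp gamma Hg.
  destruct (Req_dec gamma 1) as [E|E].
  { subst gamma. exists (RiemannInt_P7 (fun t => / Hfun D Dp t) 1).
    rewrite RiemannInt_P9, Ropp_0, exp_0; auto. }
  assert (h : gamma <= 1) by lra.
  set (k := fun t => Dp (clamp gamma 1 t) / D (clamp gamma 1 t)).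
  assert (C0 : forall x, gamma <= x <= 1 -> continuity_pt k x).
  { intros x _. unfold k.
    apply (continuity_pt_div (fun t => Dp (clamp gamma 1 t)) (fun t => D (clamp gamma 1 t))).
    - apply clamp_cont; auto. apply cont_restr with 0 1; auto; lra.
    - apply clamp_cont; auto. apply cont_restr with 0 1; auto; lra.
    - assert (Hc := clamp_in gamma 1 x h). assert (0 < D (clamp gamma 1 x)) by (apply HDp; lra). lra. }
  set (prI := @continuity_implies_RiemannInt k gamma 1 h C0).
  assert (Hext : forall x, Rmin gamma 1 <= x <= Rmax gamma 1 -> k x = / Hfun D Dp x).
  { intros x Hx. rewrite Rmin_left, Rmax_right in Hx by lra. unfold k, Hfun. rewrite clamp_id by lra.
    assert (0 < D x) by (apply HDp; lra). assert (0 < Dp x) by (apply HDpp; lra).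
    field. lra. }
  set (pr := @Riemann_integrable_ext k (fun t => / Hfun D Dp t) gamma 1 Hext prI).
  exists pr.
  assert (E1 : RiemannInt pr = RiemannInt prI).
  { apply RiemannInt_P18; auto. intros x Hx. symmetry. apply Hext. rewrite Rmin_left, Rmax_right; lra. }
  rewrite E1.
  set (P := primitive h (FTC_P1 h C0)).
  assert (HPd : forall x, gamma <= x <= 1 -> derivable_pt_lim P x (k x)).
  { intros x Hx. apply RiemannInt_P28. auto. }
  assert (P1 : P 1 = RiemannInt prI).
  { unfold P, primitive. destruct (Rle_dec gamma 1) as [r|r]; [|lra].
    destruct (Rle_dec 1 1) as [r0|r0]; [|lra]. apply RiemannInt_P18; auto. }
  assert (P0 : P gamma = 0).
  { unfold P, primitive. destruct (Rle_dec gamma gamma) as [r|r]; [|lra].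
    destruct (Rle_dec gamma 1) as [r0|r0]; [|lra]. apply RiemannInt_P9. }
  set (Phi := fun x => P x - ln (D x)).
  destruct (MVT_rel Phi (fun _ => 0) gamma 1) as [c [Hc Hc']].
  - lra.
  - intros x Hx. unfold Phi. apply limit_minus.
    + apply cpt_lim. apply derivable_continuous_pt. exists (k x). apply HPd; auto.
    + apply (lim_comp_pt D ln). apply cont_at; [apply cont_restr with 0 1; auto; lra|lra].
      apply derivable_continuous_pt. exists (/ D x). apply derivable_pt_lim_ln. apply HDp; lra.
  - intros x Hx. unfold Phi.
    replace 0 with (k x - / D x * Dp x).
    + apply dsub. apply HPd; lra. apply (dcomp D ln). apply HDd; lra. apply derivable_pt_lim_ln. apply HDp; lra.
    + unfold k. rewrite clamp_id by lra. assert (0 < D x) by (apply HDp; lra). field. lra.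
  - unfold Phi in Hc'. rewrite P0, HD1, ln_1 in Hc'.
    replace (RiemannInt prI) with (- ln (D gamma)) by (rewrite <- P1; lra).
    rewrite Ropp_involutive, exp_ln; auto.
Qed.

Lemma INR_SS1 k : INR (S (S k)) - 1 = INR k + 1.
Proof. rewrite !S_INR; ring. Qed.
Lemma INR_SS k : INR (S (S k)) = INR k + 2.
Proof. rewrite !S_INR; ring. Qed.

Theorem mainTheorem6
  (vl vh theta : R) (n1 n2 : nat)
  (F0 f0 Fstar fstar : R -> R) (Gam : (R -> R) -> Prop)
  (D Dp : R -> R)
  (beta1 beta2 G1 g1 G2 g2 : R -> R) :
  (2 <= n1)%nat -> (n1 < n2)%nat ->
  vl < vh -> 0 <= theta < 1 ->
  cdf_with_density vl vh F0 f0 -> (forall v, vl <= v <= vh -> 0 < f0 v) ->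
  ambiguity_set vl vh Gam -> Gam F0 -> Gam Fstar ->
  (forall F, Gam F -> forall x, vl <= x <= vh -> Fstar x <= F x) ->
  cdf_with_density vl vh Fstar fstar -> (forall v, vl <= v <= vh -> 0 < fstar v) ->
  (forall v, vl <= v <= vh -> D (F0 v) = Fstar v) ->
  strict_incr_on D 0 1 -> C1_on D Dp 0 1 -> D 0 = 0 -> D 1 = 1 -> 0 < Dp 0 ->
  equilibrium vl vh theta F0 D n1 beta1 ->
  equilibrium vl vh theta F0 D n2 beta2 ->
  bid_distribution vl vh F0 beta1 G1 g1 ->
  bid_distribution vl vh F0 beta2 G2 g2 ->
  theta =
    (INR n2 * (INR n1 - 1) * g1 (beta1 vl) - INR n1 * (INR n2 - 1) * g2 (beta2 vl))
    / ((INR n1 - 1) * g1 (beta1 vl) - (INR n2 - 1) * g2 (beta2 vl))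
  /\
  (forall gamma b1 b2, 0 <= gamma <= 1 ->
     is_quantile (beta1 vl) (beta1 vh) G1 gamma b1 ->
     is_quantile (beta2 vl) (beta2 vh) G2 gamma b2 ->
     Hfun D Dp gamma =
       (b2 - b1) / (1 - theta) *
       / (1 / ((INR n1 - 1) * g1 b1) - 1 / ((INR n2 - 1) * g2 b2)))
  /\
  (forall gamma, 0 < gamma <= 1 ->
     exists pr : Riemann_integrable (fun t => / Hfun D Dp t) gamma 1,
       D gamma = exp (- RiemannInt pr))
  /\
  (forall gamma v b1 b2, 0 <= gamma <= 1 ->
     is_quantile vl vh F0 gamma v ->
     is_quantile (beta1 vl) (beta1 vh) G1 gamma b1 ->
     is_quantile (beta2 vl) (beta2 vh) G2 gamma b2 ->
     v = b1 + (1 - theta) * Hfun D Dp gamma / ((INR n1 - 1) * g1 b1) /\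
     v = b2 + (1 - theta) * Hfun D Dp gamma / ((INR n2 - 1) * g2 b2)).
Proof.
  intros Hn1 Hn12 Hvv Hth HF0 Hf0p Hamb HG0 HGs Hmin HFs Hfsp HDF HDi HC1 HD0 HD1 HDp0 Heq1 Heq2 Hbid1 Hbid2.
  destruct n1 as [|[|k1]]; [lia|lia|]. destruct n2 as [|[|k2]]; [lia|lia|].
  assert (Hk : (k1 < k2)%nat) by lia.
  rewrite !INR_SS1, !INR_SS.
  destruct Hamb as [Hamb _].
  destruct (Hamb F0 HG0) as [_ [_ HF0i]]. destruct (Hamb Fstar HGs) as [_ [_ HFsi]].
  assert (HB : BaseCtx vl vh theta F0 f0 Fstar fstar) by (exact (conj Hvv (conj Hth (conj HF0 (conj Hf0p (conj HF0i (conj HFs (conj Hfsp HFsi)))))))).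
  assert (HE1 : EqCtx vl vh theta F0 f0 Fstar fstar D k1 beta1 G1 g1) by (exact (conj HB (conj HDF (conj Heq1 Hbid1)))).
  assert (HE2 : EqCtx vl vh theta F0 f0 Fstar fstar D k2 beta2 G2 g2) by (exact (conj HB (conj HDF (conj Heq2 Hbid2)))).
  assert (HDpF := B_Dp _ _ _ _ _ _ _ _ _ HB HDF HC1).
  assert (Hr := B_F0range _ _ _ _ _ _ _ HB).
  pose proof HF0 as [_ [HF0a [HF0b [_ [_ [HF0c _]]]]]].
  pose proof HFs as [_ [HFsa _]].
  assert (Hsurj : forall t, 0 <= t <= 1 -> exists v, vl <= v <= vh /\ F0 v = t).
  { intros t Ht. apply IVT_rel; auto. lra. }
  assert (HDpp : forall t, 0 <= t <= 1 -> 0 < Dp t).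
  { intros t Ht. destruct (Hsurj t Ht) as [v [Hv Hvt]]. subst t.
    assert (K := HDpF v Hv). assert (0 < f0 v) by auto. assert (0 < fstar v) by auto.
    destruct (Rlt_le_dec 0 (Dp (F0 v))) as [|L]; auto. exfalso. nra. }
  assert (HDpos : forall t, 0 < t <= 1 -> 0 < D t).
  { intros t Ht. destruct (Hsurj t ltac:(lra)) as [v [Hv Hvt]]. subst t.
    rewrite HDF by auto. assert (v <> vl) by (intro; subst; lra).
    rewrite <- HFsa. apply HFsi; lra. }
  split; [|split; [|split]].
  - assert (T1 := E_theta _ _ _ _ _ _ _ _ _ _ _ _ HE1).
    assert (T2 := E_theta _ _ _ _ _ _ _ _ _ _ _ _ HE2).
    assert (Ha : 0 < f0 vl) by (apply Hf0p; lra).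
    assert (Hk' : INR k1 < INR k2) by (apply lt_INR; auto).
    assert (Hk1 : 0 <= INR k1) by apply pos_INR.
    assert (G1e : g1 (beta1 vl) = f0 vl * (INR k1 + 2 - theta) / (INR k1 + 1)) by (rewrite T1; field; lra).
    assert (G2e : g2 (beta2 vl) = f0 vl * (INR k2 + 2 - theta) / (INR k2 + 1)) by (rewrite T2; field; lra).
    rewrite G1e, G2e. field. repeat split; try lra.
    intro Z. assert (f0 vl * (INR k1 - INR k2) = 0) by (rewrite <- Z; field; lra).
    apply Rmult_integral in H. lra.
  - intros gamma b1 b2 Hg Hq1 Hq2.
    destruct (Hsurj gamma Hg) as [v [Hv Hvg]].
    assert (Hqv : is_quantile vl vh F0 gamma v) by (split; auto).
    destruct (E_vform _ _ _ _ _ _ _ _ _ _ _ _ _ HE1 HDpF gamma v b1 Hqv Hq1) as [Eb1 Ev1].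
    destruct (E_vform _ _ _ _ _ _ _ _ _ _ _ _ _ HE2 HDpF gamma v b2 Hqv Hq2) as [Eb2 Ev2].
    destruct (Req_dec v vl) as [Ev|Ev].
    + rewrite Ev in Eb1, Eb2, Hvg. rewrite E_low with (1 := HE1) in Eb1. rewrite E_low with (1 := HE2) in Eb2.
      subst b1 b2. rewrite <- Hvg, HF0a. unfold Hfun. rewrite HD0. unfold Rdiv. ring.
    + assert (Hlt := E_order _ _ _ _ _ _ _ _ _ _ _ _ _ _ _ _ HE1 HE2 Hk v ltac:(lra)).
      assert (Hg1 : 0 < g1 b1).
      { destruct HE1 as [_ [_ [_ [_ [Hgp _]]]]]. apply Hgp. apply Hq1. }
      assert (Hg2 : 0 < g2 b2).
      { destruct HE2 as [_ [_ [_ [_ [Hgp _]]]]]. apply Hgp. apply Hq2. }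
      assert (Hk1 : 0 <= INR k1) by apply pos_INR. assert (Hk2 : 0 <= INR k2) by apply pos_INR.
      set (H := Hfun D Dp gamma) in *.
      set (X1 := 1 / ((INR k1 + 1) * g1 b1)). set (X2 := 1 / ((INR k2 + 1) * g2 b2)).
      assert (E1 : v = b1 + (1 - theta) * H * X1) by (rewrite Ev1 at 1; unfold X1; field; split; lra).
      assert (E2 : v = b2 + (1 - theta) * H * X2) by (rewrite Ev2 at 1; unfold X2; field; split; lra).
      assert (Eb : b2 - b1 = (1 - theta) * H * (X1 - X2)) by lra.
      assert (HX : X1 - X2 <> 0).
      { intro Z. rewrite Z, Rmult_0_r in Eb. subst b1 b2. lra. }
      rewrite Eb. field. split; auto; lra.
  - apply B_int; auto.
  - intros gamma v b1 b2 Hg Hqv Hq1 Hq2.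
    destruct (E_vform _ _ _ _ _ _ _ _ _ _ _ _ _ HE1 HDpF gamma v b1 Hqv Hq1) as [_ Ev1].
    destruct (E_vform _ _ _ _ _ _ _ _ _ _ _ _ _ HE2 HDpF gamma v b2 Hqv Hq2) as [_ Ev2].
    auto.
Qed.
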